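(* Let $P:\mathcal{C}^{\mathrm{op}}\to\mathbf{Pos}$ be a universal slat-doctrine such that $\mathcal{C}$ has exponents. Then the multiplication $\mu_P:(P^{ex})^{ex}\to P^{ex}$ of the existential-completion 2-monad preserves the universal structure, i.e. for all objects $A,B$ of $\mathcal{C}$, $\mu_{P,A}$ commutes with the right adjoints of reindexing along $\mathrm{pr}_A:A\times B\to A$ in $(P^{ex})^{ex}$ and in $P^{ex}$.
   Context: A slat-doctrine is a functor $P:\mathcal{C}^{\mathrm{op}}\to\mathbf{Pos}$ with $\mathcal{C}$ having finite products; $P_f$ is reindexing along $f$. It is existential (resp. universal) if reindexing along each product projection has a left adjoint $\exists$ (resp. right adjoint $\forall$) satisfying Beck–Chevalley (for every pullback of a projection $\mathrm{pr}:X\to A$ along $f:A'\to A$, with resulting projection $\mathrm{pr}'$ and $f':X'\to X$, $\exists_{\mathrm{pr}'}P_{f'}=P_f\exists_{\mathrm{pr}}$, resp. $\forall_{\mathrm{pr}'}P_{f'}=P_f\forall_{\mathrm{pr}}$). Existential completion: $P^{ex}(A)$ is the poset (reflection) of triples $(A,B,\alpha)$, $\alpha\in P(A\times B)$, with $(A,B,\alpha)\le(A,C,\beta)$ iff some $f:A\times B\to C$ has $\alpha\le P_{\langle\mathrm{pr}_A,f\rangle}(\beta)$; $P^{ex}_f(C,D,\gamma)=(A,D,P_{f\times 1_D}(\gamma))$. $P^{ex}$ is existential with $\exists^{ex}_{\mathrm{pr}_1}(A_1\times A_2,B,\beta)=(A_1,A_2\times B,\beta)$; when $P$ is universal and $\mathcal{C}$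 has exponents, $P^{ex}$ and $(P^{ex})^{ex}$ are universal. The multiplication component $\mu_{P,A}:(P^{ex})^{ex}(A)\to P^{ex}(A)$ sends $(A,B,x)$, with $x\in P^{ex}(A\times B)$, to $\exists^{ex}_{\mathrm{pr}_A}(x)$ for $\mathrm{pr}_A:A\times B\to A$. *)

(* Defs.v *)
Set Implicit Arguments.
Unset Strict Implicit.

Record FPCat := {
  obj : Type;
  hom : obj -> obj -> Type;
  idm : forall A, hom A A;
  comp : forall A B C, hom B C -> hom A B -> hom A C;
  comp_id_l : forall A B (f : hom A B), comp (idm B) f = f;
  comp_id_r : forall A B (f : hom A B), comp f (idm A) = f;
  comp_assoc : forall A B C D (h : hom C D) (g : hom B C) (f : hom A B),
      comp h (comp g f) = comp (comp h g) f;
  term : obj;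
  bang : forall A, hom A term;
  bang_uniq : forall A (f : hom A term), f = bang A;
  prod : obj -> obj -> obj;
  pr1 : forall A B, hom (prod A B) A;
  pr2 : forall A B, hom (prod A B) B;
  pair : forall X A B, hom X A -> hom X B -> hom X (prod A B);
  pair_pr1 : forall X A B (f : hom X A) (g : hom X B), comp (pr1 A B) (pair f g) = f;
  pair_pr2 : forall X A B (f : hom X A) (g : hom X B), comp (pr2 A B) (pair f g) = g;
  pair_uniq : forall X A B (h : hom X (prod A B)),
      pair (comp (pr1 A B) h) (comp (pr2 A B) h) = h
}.

Arguments hom : clear implicits.
Arguments obj C : rename.
Arguments idm {C} A : rename.
Arguments comp {C A B D} _ _ : rename.
Arguments bang {C} A : rename.
Arguments pr1 {C} A B : rename.
Arguments pr2 {C} A B : rename.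
Arguments pair {C X A B} _ _ : rename.
Arguments prod {C} _ _ : rename.
Arguments term {C} : rename.

Definition prodmap (C : FPCat) (A A' B B' : obj C) (f : hom C A A') (g : hom C B B')
  : hom C (prod A B) (prod A' B') :=
  pair (comp f (pr1 A B)) (comp g (pr2 A B)).

Definition assoc (C : FPCat) (A B D : obj C) : hom C (prod A (prod B D)) (prod (prod A B) D) :=
  pair (pair (pr1 A (prod B D)) (comp (pr1 B D) (pr2 A (prod B D))))
       (comp (pr2 B D) (pr2 A (prod B D))).

Record Exponents (C : FPCat) := {
  expo : obj C -> obj C -> obj C;               (* expo B D = D^B *)
  ev : forall B D, hom C (prod (expo B D) B) D;
  cur : forall A B D, hom C (prod A B) D -> hom C A (expo B D);
  ev_cur : forall A B D (f : hom C (prod A B) D),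
      comp (ev B D) (prodmap (cur f) (idm B)) = f;
  cur_uniq : forall A B D (g : hom C A (expo B D)),
      cur (comp (ev B D) (prodmap g (idm B))) = g
}.

Record Doctrine (C : FPCat) := {
  dcar : obj C -> Type;
  dle : forall A, dcar A -> dcar A -> Prop;
  dre : forall A B, hom C A B -> dcar B -> dcar A
}.

Arguments dcar {C} d A : rename.
Arguments dle {C} d {A} _ _ : rename.
Arguments dre {C} d {A B} _ _ : rename.

Unset Implicit Arguments.

Definition is_poset_doctrine {C : FPCat} (P : Doctrine C) : Prop :=
  (forall A (a : dcar P A), dle P a a) /\
  (forall A (a b c : dcar P A), dle P a b -> dle P b c -> dle P a c) /\
  (forall A (a b : dcar P A), dle P a b -> dle P b a -> a = b) /\
  (forall A B (f : hom C A B) (a b : dcar P B), dle P a b -> dle P (dre P f a) (dre P f b)) /\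
  (forall A (a : dcar P A), dre P (idm A) a = a) /\
  (forall A B D (f : hom C A B) (g : hom C B D) (a : dcar P D),
      dre P (comp g f) a = dre P f (dre P g a)).

Definition right_adj_proj {C : FPCat} (D : Doctrine C)
  (fa : forall A B : obj C, dcar D (prod A B) -> dcar D A) : Prop :=
  forall A B (a : dcar D A) (b : dcar D (prod A B)),
    dle D (dre D (pr1 A B) a) b <-> dle D a (fa A B b).

(* Beck-Chevalley for the pullback of pr_A : A x B -> A along f : A' -> A
   (the pullback being A' x B with f x 1_B). *)
Definition BC_forall {C : FPCat} (D : Doctrine C)
  (fa : forall A B : obj C, dcar D (prod A B) -> dcar D A) : Prop :=
  forall A A' B (f : hom C A' A) (b : dcar D (prod A B)),
    fa A' B (dre D (prodmap f (idm B)) b) = dre D f (fa A B b).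

Definition universal {C : FPCat} (P : Doctrine C) : Prop :=
  exists fa : forall A B : obj C, dcar P (prod A B) -> dcar P A,
    right_adj_proj P fa /\ BC_forall P fa.

(* Existential completion P^ex (as a preorder; P^ex(A) is its poset reflection). *)
Definition exCompl {C : FPCat} (P : Doctrine C) : Doctrine C := {|
  dcar := fun A => { B : obj C & dcar P (prod A B) };
  dle := fun A x y =>
    exists f : hom C (prod A (projT1 x)) (projT1 y),
      dle P (projT2 x) (dre P (pair (pr1 A (projT1 x)) f) (projT2 y));
  dre := fun A A' f y =>
    existT (fun B => dcar P (prod A B)) (projT1 y)
           (dre P (prodmap f (idm (projT1 y))) (projT2 y))
|}.

(* Equality in the poset reflection. *)
Definition dequiv {C : FPCat} (D : Doctrine C) {A : obj C} (x y : dcar D A) : Prop :=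
  dle D x y /\ dle D y x.

(* Multiplication mu_{P,A} : (P^ex)^ex(A) -> P^ex(A):
   (A, B, (A x B, D, alpha)) |-> exists^ex_{pr_A} (A x B, D, alpha)
                             = (A, B x D, P_assoc(alpha)). *)
Definition mu {C : FPCat} (P : Doctrine C) (A : obj C)
  (x : dcar (exCompl (exCompl P)) A) : dcar (exCompl P) A :=
  existT (fun E => dcar P (prod A E)) (prod (projT1 x) (projT1 (projT2 x)))
         (dre P (assoc A (projT1 x) (projT1 (projT2 x))) (projT2 (projT2 x))).

(* Main.v *)
Require Import Defs.

Section Aux.
Context {C : FPCat}.

Lemma comp_pair (X Y A B : obj C) (f : hom C Y A) (g : hom C Y B) (h : hom C X Y) :
  comp (pair f g) h = pair (comp f h) (comp g h).
Proof.
  rewrite <- (pair_uniq (comp (pair f g) h)).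
  rewrite !comp_assoc, pair_pr1, pair_pr2. reflexivity.
Qed.

Lemma hom_ext (X A B : obj C) (h1 h2 : hom C X (prod A B)) :
  comp (pr1 A B) h1 = comp (pr1 A B) h2 -> comp (pr2 A B) h1 = comp (pr2 A B) h2 -> h1 = h2.
Proof.
  intros H H'. rewrite <- (pair_uniq h1), <- (pair_uniq h2), H, H'. reflexivity.
Qed.

Lemma pair_id (A B : obj C) : pair (pr1 A B) (pr2 A B) = idm (prod A B).
Proof.
  rewrite <- (pair_uniq (idm (prod A B))), !comp_id_r. reflexivity.
Qed.

Lemma pr1_pair_l (X Y A B : obj C) (x : hom C A Y) (f : hom C X A) (g : hom C X B) :
  comp (comp x (pr1 A B)) (pair f g) = comp x f.
Proof. rewrite <- comp_assoc, pair_pr1. reflexivity. Qed.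

Lemma pr2_pair_l (X Y A B : obj C) (x : hom C B Y) (f : hom C X A) (g : hom C X B) :
  comp (comp x (pr2 A B)) (pair f g) = comp x g.
Proof. rewrite <- comp_assoc, pair_pr2. reflexivity. Qed.

Lemma term_eq (X : obj C) (a b : hom C X term) : a = b.
Proof. rewrite (bang_uniq a), (bang_uniq b). reflexivity. Qed.

End Aux.

Ltac hsimpl := repeat (rewrite ?comp_assoc, ?pair_pr1, ?pair_pr2, ?comp_pair,
   ?comp_id_l, ?comp_id_r, ?pr1_pair_l, ?pr2_pair_l).

Ltac heq := unfold prodmap, assoc; hsimpl;
  first [reflexivity | apply term_eq | (apply hom_ext; heq)].

Section Main.
Context {C : FPCat} {P : Doctrine C}.
Hypothesis HP : is_poset_doctrine P.

Lemma Prefl A (a : dcar P A) : dle P a a.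
Proof. destruct HP as [H _]. apply H. Qed.
Lemma Ptrans A (a b c : dcar P A) : dle P a b -> dle P b c -> dle P a c.
Proof. destruct HP as [_ [H _]]. apply H. Qed.
Lemma Pmono A B (f : hom C A B) (a b : dcar P B) : dle P a b -> dle P (dre P f a) (dre P f b).
Proof. destruct HP as [_ [_ [_ [H _]]]]. apply H. Qed.
Lemma Pid A (a : dcar P A) : dre P (idm A) a = a.
Proof. destruct HP as [_ [_ [_ [_ [H _]]]]]. apply H. Qed.
Lemma Pcomp A B D (f : hom C A B) (g : hom C B D) (a : dcar P D) :
  dre P f (dre P g a) = dre P (comp g f) a.
Proof. destruct HP as [_ [_ [_ [_ [_ H]]]]]. symmetry. apply H. Qed.

Lemma Peq A B (f g : hom C A B) (a : dcar P B) : f = g -> dle P (dre P f a) (dre P g a).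
Proof. intros ->. apply Prefl. Qed.

Lemma Peq_id A (f : hom C A A) (a : dcar P A) : idm A = f -> dle P a (dre P f a).
Proof. intros <-. rewrite Pid. apply Prefl. Qed.

Lemma ex_refl A (a : dcar (exCompl P) A) : dle (exCompl P) a a.
Proof.
  destruct a as [B al]. simpl. exists (pr2 A B). rewrite pair_id, Pid. apply Prefl.
Qed.

Lemma ex_trans A (a b c : dcar (exCompl P) A) :
  dle (exCompl P) a b -> dle (exCompl P) b c -> dle (exCompl P) a c.
Proof.
  destruct a as [B al], b as [B' be], c as [B'' ga]. simpl.
  intros [f Hf] [g Hg]. exists (comp g (pair (pr1 A B) f)).
  eapply Ptrans; [apply Hf|]. eapply Ptrans; [apply Pmono, Hg|].
  rewrite Pcomp. apply Peq. heq.
Qed.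

Lemma ex_id A (a : dcar (exCompl P) A) : dre (exCompl P) (idm A) a = a.
Proof.
  destruct a as [B al]. simpl. f_equal.
  replace (prodmap (idm A) (idm B)) with (idm (prod A B)) by (symmetry; heq).
  apply Pid.
Qed.

Lemma exex_refl A (a : dcar (exCompl (exCompl P)) A) : dle (exCompl (exCompl P)) a a.
Proof.
  destruct a as [B al]. hnf. exists (pr2 A B). cbn [projT1 projT2].
  rewrite pair_id, ex_id. apply ex_refl.
Qed.

Lemma mu_mono A (x y : dcar (exCompl (exCompl P)) A) :
  dle (exCompl (exCompl P)) x y -> dle (exCompl P) (mu P A x) (mu P A y).
Proof.
  destruct x as [X [Y al]], y as [X' [Y' al']]. simpl.
  intros [f [g Hg]]. simpl in Hg.
  exists (pair (comp f (pair (pr1 A (prod X Y)) (comp (pr1 X Y) (pr2 A (prod X Y)))))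
               (comp g (assoc A X Y))).
  rewrite !Pcomp in Hg |- *.
  eapply Ptrans; [apply Pmono, Hg|]. rewrite Pcomp. apply Peq. heq.
Qed.

Lemma mu_nat A A' (h : hom C A' A) (y : dcar (exCompl (exCompl P)) A) :
  dle (exCompl P) (dre (exCompl P) h (mu P A y))
                  (mu P A' (dre (exCompl (exCompl P)) h y)).
Proof.
  destruct y as [X [Y al]]. simpl. exists (pr2 A' (prod X Y)).
  rewrite !Pcomp. apply Peq. heq.
Qed.

End Main.

Theorem lemma2 (C : FPCat) (E : Exponents C) (P : Doctrine C)
  (HP : is_poset_doctrine P) (Huniv : universal P)
  (fa1 : forall A B : obj C, dcar (exCompl P) (prod A B) -> dcar (exCompl P) A)
  (H1 : right_adj_proj (exCompl P) fa1)
  (fa2 : forall A B : obj C,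
      dcar (exCompl (exCompl P)) (prod A B) -> dcar (exCompl (exCompl P)) A)
  (H2 : right_adj_proj (exCompl (exCompl P)) fa2) :
  forall (A B : obj C) (x : dcar (exCompl (exCompl P)) (prod A B)),
    dequiv (exCompl P) (mu P A (fa2 A B x)) (fa1 A B (mu P (prod A B) x)).
Proof.
  intros A B x. split.
  - apply (proj1 (H1 _ _ _ _)).
    eapply (ex_trans HP); [apply (mu_nat HP)|].
    apply (mu_mono HP).
    apply (proj2 (H2 _ _ _ _)). apply (exex_refl HP).
  - pose proof (proj2 (H1 A B (fa1 A B (mu P _ x)) (mu P _ x)) (ex_refl HP _ _)) as Hz.
    pose proof (fun w Hw' => mu_mono HP _ _ _ (proj1 (H2 A B w x) Hw')) as Hw.
    revert Hz. generalize (fa1 A B (mu P (prod A B) x)) as z.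
    intros [Z ga] Hz.
    destruct x as [X [Y al]].
    set (w := existT (fun B0 => dcar (exCompl P) (prod A B0)) Z
                (existT (fun B1 => dcar P (prod (prod A Z) B1)) term
                   (dre P (pr1 (prod A Z) term) ga))).
    eapply (ex_trans HP); [ | apply (Hw w)].
    + simpl. exists (pair (pr2 A Z) (bang (prod A Z))).
      rewrite !Pcomp by exact HP. apply (Peq_id HP). heq.
    + simpl in Hz |- *. destruct Hz as [f Hf].
      exists (comp (pr1 X Y) f). simpl.
      exists (comp (pr2 X Y) (comp f (pr1 _ term))).
      eapply (Ptrans HP); [ | eapply (Ptrans HP);
         [apply (Pmono HP _ _ (pr1 _ term)), Hf | ] ].
      * rewrite !(Pcomp HP). apply (Peq HP). heq.
      * rewrite !(Pcomp HP). apply (Peq HP). heq.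
Qed.
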